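(* Let $s\ge4$, $d=s-3$, $V=\mathbb{F}_2^s$, and let $\mathbf b_{12},\mathbf b_{13},\mathbf b_{23}\in\mathbb{F}_2^d$ (with $\mathbf b_{ji}:=\mathbf b_{ij}$, $\mathbf b_{ii}:=\mathbf 0$) be such that the symmetric zero-diagonal matrix $\Theta=(\mathbf b_{ij})_{1\le i,j\le3}$ has no nontrivial $\mathbb{F}_2$-linear combination of its columns equal to zero. Let $\circ$ be the operation on $V$ $$x\circ y=x+y+\Big(0,0,0,\sum_{1\le i<j\le3}(x_iy_j+x_jy_i)\mathbf b_{ij}\Big).$$ Let $\lambda\in\mathbb{F}_2^{s\times s}$ (acting on row vectors by $x\mapsto x\lambda$). Then $\lambda\in H_\circ$ if and only if $$\lambda=\begin{pmatrix}A&B\\ 0_{d,3}&D\end{pmatrix}$$ for some $A\in\mathrm{GL}(\mathbb{F}_2^3)$, $D\in\mathrm{GL}(\mathbb{F}_2^d)$ and $B\in\mathbb{F}_2^{3\times d}$ satisfying, for all $1\le i<j\le3$, the compatibility equations $$\mathbf b_{ij}D=\sum_{1\le k_1<k_2\le3}\big(A_{ik_1}A_{jk_2}+A_{ik_2}A_{jk_1}\big)\mathbf b_{k_1k_2},$$ where $A_{kl}$ denotes the $(k,l)$ entry of $A$.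
   Context: The operation $\circ$ is an alternative operation on $V$ (its translations $x\mapsto x\circ a$ form an elementary abelian regular group of xor-affine maps) with weak key space $\{k: x\circ k=x+k\ \forall x\}$ equal to the span of the last $d$ canonical vectors. $H_\circ$ is the group of maps $f\in\mathrm{GL}(V,+)$ with $(a\circ b)f=af\circ bf$ for all $a,b\in V$ (postfix notation). Vectors $\mathbf b_{ij}$ are row vectors, so $\mathbf b_{ij}D$ is a vector-matrix product. *)

(* Defs.v *)
From HB Require Import structures.
From mathcomp Require Import all_boot all_order all_algebra all_fingroup.
Set Implicit Arguments. Unset Strict Implicit. Unset Printing Implicit Defensive.
Import GRing.Theory.
Local Open Scope ring_scope.

(* The symmetric zero-diagonal "matrix" Theta = (b_ij), indices 0,1,2 for 1,2,3. *)
Definition bmat (d : nat) (b12 b13 b23 : 'rV['F_2]_d) (i j : 'I_3) : 'rV['F_2]_d :=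
  match nat_of_ord i, nat_of_ord j with
  | 0, 1 | 1, 0 => b12
  | 0, 2 | 2, 0 => b13
  | 1, 2 | 2, 1 => b23
  | _, _ => 0
  end.

Definition cols_independent (d : nat) (b : 'I_3 -> 'I_3 -> 'rV['F_2]_d) : Prop :=
  forall c : 'I_3 -> 'F_2,
    (forall i : 'I_3, \sum_(j < 3) c j *: b i j = 0) -> forall j, c j = 0.

Definition circ (d : nat) (b : 'I_3 -> 'I_3 -> 'rV['F_2]_d)
    (x y : 'rV['F_2]_(3 + d)) : 'rV['F_2]_(3 + d) :=
  x + y + row_mx (0 : 'rV['F_2]_3)
    (\sum_(i < 3) \sum_(j < 3 | (i < j)%N)
        (x 0 (lshift d i) * y 0 (lshift d j) + x 0 (lshift d j) * y 0 (lshift d i)) *: b i j).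

Definition in_H (n : nat) (op : 'rV['F_2]_n -> 'rV['F_2]_n -> 'rV['F_2]_n)
    (lam : 'M['F_2]_n) : Prop :=
  lam \in unitmx /\ forall a b : 'rV['F_2]_n, op a b *m lam = op (a *m lam) (b *m lam).

(* Main.v *)
Require Import Defs.
From HB Require Import structures.
From mathcomp Require Import all_boot all_order all_algebra all_fingroup.
Import GRing.Theory.
Local Open Scope ring_scope.

Definition o1 : 'I_3 := @Ordinal 3 1 isT.
Definition o2 : 'I_3 := @Ordinal 3 2 isT.
Lemma lift01 : lift ord0 (ord0 : 'I_2) = o1. Proof. exact: val_inj. Qed.
Lemma lift02 : lift ord0 (lift ord0 (ord0 : 'I_1)) = o2. Proof. exact: val_inj. Qed.

Lemma sum3 (V : zmodType) (F : 'I_3 -> V) : \sum_(i < 3) F i = F ord0 + F o1 + F o2.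
Proof. by rewrite !big_ord_recl big_ord0 addr0 lift01 lift02 addrA. Qed.

Lemma sum3lt (V : zmodType) (F : 'I_3 -> 'I_3 -> V) :
  \sum_(i < 3) \sum_(j < 3 | (i < j)%N) F i j = F ord0 o1 + F ord0 o2 + F o1 o2.
Proof.
rewrite sum3; do 3 rewrite big_mkcond sum3 /=. by rewrite ?addr0 ?add0r.
Qed.

Lemma F2_add_self (x : 'F_2) : x + x = 0.
Proof. by case: x => [[|[|]]] //= ?; apply: val_inj. Qed.
From mathcomp Require Import ring.
Lemma F2_two : (2 : 'F_2) = 0. Proof. by apply: val_inj. Qed.
Lemma F2_mod2 (z x y : 'F_2) : x + 2 * z = y -> x = y.
Proof. by rewrite F2_two mul0r addr0. Qed.

Set Implicit Arguments.
Section S.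
Variables (d : nat) (b12 b13 b23 : 'rV['F_2]_d).
Local Notation b := (bmat b12 b13 b23).

Definition Qt (u v : 'rV['F_2]_3) : 'rV['F_2]_d :=
  \sum_(i < 3) \sum_(j < 3 | (i < j)%N) (u 0 i * v 0 j + u 0 j * v 0 i) *: b i j.

Lemma QtE u v : Qt u v =
  (u 0 ord0 * v 0 o1 + u 0 o1 * v 0 ord0) *: b12 +
  (u 0 ord0 * v 0 o2 + u 0 o2 * v 0 ord0) *: b13 +
  (u 0 o1 * v 0 o2 + u 0 o2 * v 0 o1) *: b23.
Proof. by rewrite /Qt sum3lt. Qed.

Lemma circE x y : circ b x y = x + y + row_mx 0 (Qt (lsubmx x) (lsubmx y)).
Proof.
rewrite /circ /Qt; do 2 f_equal; apply: eq_bigr => i _; apply: eq_bigr => j _.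
by rewrite !mxE.
Qed.

Lemma Qt_row (A : 'M['F_2]_3) i j : Qt (row i A) (row j A) =
  \sum_(k1 < 3) \sum_(k2 < 3 | (k1 < k2)%N)
             (A i k1 * A j k2 + A i k2 * A j k1) *: b k1 k2.
Proof. by apply: eq_bigr => k1 _; apply: eq_bigr => k2 _; rewrite !mxE. Qed.

Lemma core (A : 'M['F_2]_3) (D : 'M['F_2]_d) :
  b12 *m D = Qt (row ord0 A) (row o1 A) ->
  b13 *m D = Qt (row ord0 A) (row o2 A) ->
  b23 *m D = Qt (row o1 A) (row o2 A) ->
  forall u v, Qt u v *m D = Qt (u *m A) (v *m A).
Proof.
move=> E1 E2 E3 u v.
rewrite QtE !mulmxDl -!scalemxAl E1 E2 E3.
apply/rowP => k; rewrite !QtE !mxE !sum3.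
set u0 := u 0 ord0; set u1 := u 0 o1; set u2 := u 0 o2.
set v0 := v 0 ord0; set v1 := v 0 o1; set v2 := v 0 o2.
set c12 := b12 0 k; set c13 := b13 0 k; set c23 := b23 0 k.
apply: (F2_mod2 (
  c12 * (u0 * v0 * A ord0 ord0 * A ord0 o1 + u1 * v1 * A o1 ord0 * A o1 o1 + u2 * v2 * A o2 ord0 * A o2 o1) +
  c13 * (u0 * v0 * A ord0 ord0 * A ord0 o2 + u1 * v1 * A o1 ord0 * A o1 o2 + u2 * v2 * A o2 ord0 * A o2 o2) +
  c23 * (u0 * v0 * A ord0 o1 * A ord0 o2 + u1 * v1 * A o1 o1 * A o1 o2 + u2 * v2 * A o2 o1 * A o2 o2))).
ring.
Qed.
Lemma Qt_rad (hind : cols_independent b) x : (forall u, Qt x u = 0) -> x = 0.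
Proof.
move=> H.
have Hc : forall i, \sum_(j<3) x 0 j *: b i j = 0.
  move=> i; transitivity (Qt x (delta_mx 0 i)); last exact: H.
  rewrite sum3 QtE; apply/rowP => k.
  by case: i => [[|[|[|//]]]] Hi; rewrite !mxE /=; ring.
by apply/rowP => j; rewrite mxE (hind (fun j => x 0 j) Hc j).
Qed.

Lemma Qt0 y : Qt 0 y = 0.
Proof. by rewrite QtE !mxE !mul0r !add0r !scale0r !addr0. Qed.

Lemma Qt_delta (i j : 'I_3) : (i < j)%N -> Qt (delta_mx 0 i) (delta_mx 0 j) = b i j.
Proof.
case: i => [[|[|[|//]]]] Hi; case: j => [[|[|[|//]]]] Hj //= _;
  by apply/rowP => k; rewrite QtE !mxE /=; ring.
Qed.
End S.
Unset Implicit Arguments.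

Lemma lsub_mul d p (a : 'rV['F_2]_(3 + d)) (A : 'M_(3, p)) (B : 'M_(3, d)) (C : 'M_(d, p)) (D : 'M_d) :
  lsubmx (a *m block_mx A B C D) = lsubmx a *m A + rsubmx a *m C.
Proof. by rewrite -{1}[a]hsubmxK mul_row_block row_mxKl. Qed.

Theorem theorem6 (d : nat) (hd : (0 < d)%N) (b12 b13 b23 : 'rV['F_2]_d)
    (hind : cols_independent (bmat b12 b13 b23))
    (lam : 'M['F_2]_(3 + d)) :
  in_H (circ (bmat b12 b13 b23)) lam <->
  exists (A : 'M['F_2]_3) (B : 'M['F_2]_(3, d)) (D : 'M['F_2]_d),
    [/\ A \in unitmx, D \in unitmx,
        lam = block_mx A B 0 D &
        forall i j : 'I_3, (i < j)%N ->
          bmat b12 b13 b23 i j *m D =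
          \sum_(k1 < 3) \sum_(k2 < 3 | (k1 < k2)%N)
             (A i k1 * A j k2 + A i k2 * A j k1) *: bmat b12 b13 b23 k1 k2].
Proof.
split.
- have [A [B [C [D ->]]]] : exists A B C D, lam = block_mx A B C D.
    by exists (ulsubmx lam), (ursubmx lam), (dlsubmx lam), (drsubmx lam); rewrite submxK.
  case=> Hu Hc.
  have key2 : forall x y w z, Qt b12 b13 b23 x y *m C = 0 /\
      Qt b12 b13 b23 x y *m D = Qt b12 b13 b23 (x *m A + w *m C) (y *m A + z *m C).
    move=> x y w z; have := Hc (row_mx x w) (row_mx y z).
    rewrite !circE !mulmxDl => /addrI.
    rewrite !lsub_mul !row_mxKl !row_mxKr mul_row_block !mul0mx !add0r.
    by case/eq_row_mx.
  have C0 : C = 0.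
    have hw : forall w : 'rV_d, w *m C = 0.
      move=> w; apply: (Qt_rad hind) => u.
      set r := row_mx u 0 *m invmx (block_mx A B C D).
      have hr : lsubmx r *m A + rsubmx r *m C = u.
        have : r *m block_mx A B C D = row_mx u 0 by rewrite mulmxKV.
        by rewrite -[r in r *m _]hsubmxK mul_row_block => /eq_row_mx [-> _].
      have [_ h] := key2 0 (lsubmx r) w (rsubmx r).
      by rewrite hr mul0mx add0r Qt0 mul0mx in h; rewrite -h.
    apply/matrixP => i j; have := hw (delta_mx 0 i); rewrite -rowE.
    by move/rowP/(_ j); rewrite !mxE.
  subst C.
  have [uA uD] : A \in unitmx /\ D \in unitmx.
    by move: Hu; rewrite !unitmxE det_ublock unitrM => /andP.
  exists A, B, D; split => // i j lt_ij.
  have [_ h] := key2 (delta_mx 0 i) (delta_mx 0 j) 0 0.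
  rewrite !mul0mx !addr0 -!rowE (@Qt_delta _ b12 b13 b23 i j lt_ij) in h.
  by rewrite h Qt_row.
- case=> A [B [D [uA uD -> E]]]; split.
    by rewrite unitmxE det_ublock unitrM -!unitmxE uA uD.
  have E1 : b12 *m D = Qt b12 b13 b23 (row ord0 A) (row o1 A).
    by rewrite Qt_row; exact: (E ord0 o1 isT).
  have E2 : b13 *m D = Qt b12 b13 b23 (row ord0 A) (row o2 A).
    by rewrite Qt_row; exact: (E ord0 o2 isT).
  have E3 : b23 *m D = Qt b12 b13 b23 (row o1 A) (row o2 A).
    by rewrite Qt_row; exact: (E o1 o2 isT).
  move=> a c; rewrite !circE !mulmxDl; congr (_ + _).
  by rewrite !lsub_mul mul_row_block !mul0mx !mulmx0 !addr0 !add0r (core E1 E2 E3).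
Qed.
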